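(* Let $\alpha,\beta,\gamma,\delta\in\mathbb{R}$ with $\alpha+\delta\neq 0$ and $\alpha\gamma=0$, and let $G_7$ be the connected, simply connected Lie group whose Lie algebra $\mathfrak{g}_7$ has a basis $\{e_1,e_2,e_3\}$ with $[e_1,e_2]=-\alpha e_1-\beta e_2-\beta e_3$, $[e_1,e_3]=\alpha e_1+\beta e_2+\beta e_3$, $[e_2,e_3]=\gamma e_1+\delta e_2+\delta e_3$, equipped with the left-invariant Lorentzian metric $g$ for which $\{e_1,e_2,e_3\}$ is pseudo-orthonormal with $e_3$ timelike. Let $\lambda_0,c\in\mathbb{R}$. Then there exists a derivation $D$ of $\mathfrak{g}_7$ with $\mathrm{Ric}=(s\lambda_0+c)\mathrm{Id}+D$ (i.e. $(G_7,g)$ is an algebraic Schouten soliton associated to the Levi-Civita connection) if and only if $\gamma=0$ and $c=0$.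
   Context: Pseudo-orthonormal means $g(e_1,e_1)=g(e_2,e_2)=1$, $g(e_3,e_3)=-1$, $g(e_i,e_j)=0$ for $i\neq j$; left-invariant tensors are identified with their values on $\mathfrak{g}$. $\nabla$ is the Levi-Civita connection of $g$, with curvature $R(X,Y)Z=\nabla_X\nabla_YZ-\nabla_Y\nabla_XZ-\nabla_{[X,Y]}Z$. The Ricci tensor is $\rho(X,Y)=-g(R(X,e_1)Y,e_1)-g(R(X,e_2)Y,e_2)+g(R(X,e_3)Y,e_3)$, the Ricci operator $\mathrm{Ric}$ is defined by $\rho(X,Y)=g(\mathrm{Ric}(X),Y)$, and the scalar curvature is $s=\rho(e_1,e_1)+\rho(e_2,e_2)-\rho(e_3,e_3)$. A derivation of $\mathfrak{g}$ is a linear map $D:\mathfrak{g}\to\mathfrak{g}$ with $D[X,Y]=[DX,Y]+[X,DY]$ for all $X,Y\in\mathfrak{g}$. $(G,g)$ is called an algebraic Schouten soliton associated to $\nabla$ (with real constants $\lambda_0$, $c$) if $\mathrm{Ric}=(s\lambda_0+c)\mathrm{Id}+D$ for some derivation $D$. *)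

(* Defs.v *)
(* The Lie algebra g7 is modelled as R^3 = 'rV[R]_3 with
   the standard basis e_0, e_1, e_2 (= paper's e1, e2, e3). *)
From HB Require Import structures.
From mathcomp Require Import all_boot all_order all_algebra.
Set Implicit Arguments. Unset Strict Implicit. Unset Printing Implicit Defensive.
Import Order.TTheory GRing.Theory Num.Theory.
Local Open Scope ring_scope.

Section G7.
Variable R : realFieldType.
Variables (alpha beta gamma delta : R).

Definition vec3 (x y z : R) : 'rV[R]_3 := \row_(k < 3) [:: x; y; z]`_k.

Definition e (i : 'I_3) : 'rV[R]_3 := delta_mx 0 i.

Definition bc (i j : 'I_3) : 'rV[R]_3 :=
  match val i, val j with
  | 0, 1 => vec3 (- alpha) (- beta) (- beta)
  | 1, 0 => - vec3 (- alpha) (- beta) (- beta)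
  | 0, 2 => vec3 alpha beta beta
  | 2, 0 => - vec3 alpha beta beta
  | 1, 2 => vec3 gamma delta delta
  | 2, 1 => - vec3 gamma delta delta
  | _, _ => 0
  end.

Definition brk (X Y : 'rV[R]_3) : 'rV[R]_3 :=
  \sum_(i < 3) \sum_(j < 3) (X 0 i * Y 0 j) *: bc i j.

Definition eps (i : 'I_3) : R := if val i == 2 then -1 else 1.

Definition gm (X Y : 'rV[R]_3) : R := \sum_(i < 3) eps i * X 0 i * Y 0 i.

(* Levi-Civita connection on left-invariant fields (Koszul formula):
   2 g(nabla_X Y, Z) = g([X,Y],Z) - g([Y,Z],X) + g([Z,X],Y). *)
Definition nabla (X Y : 'rV[R]_3) : 'rV[R]_3 :=
  \sum_(k < 3)
    (eps k / 2 * (gm (brk X Y) (e k) - gm (brk Y (e k)) X + gm (brk (e k) X) Y))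
      *: e k.

Definition curv (X Y Z : 'rV[R]_3) : 'rV[R]_3 :=
  nabla X (nabla Y Z) - nabla Y (nabla X Z) - nabla (brk X Y) Z.

Definition rho (X Y : 'rV[R]_3) : R :=
  - gm (curv X (e 0) Y) (e 0) - gm (curv X (e 1) Y) (e 1)
  + gm (curv X (e 2) Y) (e 2).

(* Ricci operator: the unique Ric with rho(X,Y) = g(Ric X, Y) *)
Definition Ric (X : 'rV[R]_3) : 'rV[R]_3 :=
  \sum_(k < 3) (eps k * rho X (e k)) *: e k.

Definition scal : R := rho (e 0) (e 0) + rho (e 1) (e 1) - rho (e 2) (e 2).

(* a linear map D : g7 -> g7, represented by its matrix acting on row
   vectors (X |-> X *m D), is a derivation of g7 *)
Definition is_derivation (D : 'M[R]_3) : Prop :=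
  forall X Y : 'rV[R]_3, brk X Y *m D = brk (X *m D) Y + brk X (Y *m D).

Definition algebraic_schouten_soliton (lambda0 c : R) : Prop :=
  exists D : 'M[R]_3, is_derivation D /\
    forall X : 'rV[R]_3, Ric X = (scal * lambda0 + c) *: X + X *m D.

End G7.

(* Main.v *)
Require Import Defs.
From mathcomp Require Import all_boot all_order all_algebra.
From mathcomp Require Import ring lra.
Import Order.TTheory GRing.Theory Num.Theory.
Local Open Scope ring_scope.

Lemma ord3 (j : 'I_3) : j = 0 \/ j = 1 \/ j = 2.
Proof.
case: j => -[|[|[|//]]] Hj; [left|right;left|right;right]; exact/val_inj.
Qed.

Lemma vec3E (R : realFieldType) (x y z : R) :
  (vec3 x y z 0 0 = x) * (vec3 x y z 0 1 = y) * (vec3 x y z 0 2 = z).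
Proof. by rewrite !mxE. Qed.

Lemma eE (R : realFieldType) (i j : 'I_3) : (e R i) 0 j = (i == j)%:R.
Proof. by rewrite /e mxE eqxx eq_sym. Qed.

Lemma sum3 (R : realFieldType) (F : 'I_3 -> R) :
  \sum_(i < 3) F i = F 0 + F 1 + F 2.
Proof. rewrite !big_ord_recl big_ord0 addr0 addrA; congr (_ + _ + _); congr F; exact/val_inj. Qed.

Lemma sum3v (R : realFieldType) (F : 'I_3 -> 'rV[R]_3) :
  \sum_(i < 3) F i = F 0 + F 1 + F 2.
Proof. rewrite !big_ord_recl big_ord0 addr0 addrA; congr (_ + _ + _); congr F; exact/val_inj. Qed.

Lemma row3 (R : realFieldType) (X Y : 'rV[R]_3) :
  X 0 0 = Y 0 0 -> X 0 1 = Y 0 1 -> X 0 2 = Y 0 2 -> X = Y.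
Proof.
move=> h0 h1 h2; apply/rowP => k; by case: (ord3 k) => [->|[->|->]].
Qed.

Lemma brkE (R : realFieldType) (a b g d : R) (X Y : 'rV[R]_3) :
  brk a b g d X Y =
  vec3 (- a*X 0 0*Y 0 1 + a*X 0 0*Y 0 2 + a*X 0 1*Y 0 0 + g*X 0 1*Y 0 2 - a*X 0 2*Y 0 0 - g*X 0 2*Y 0 1)
       (- b*X 0 0*Y 0 1 + b*X 0 0*Y 0 2 + b*X 0 1*Y 0 0 + d*X 0 1*Y 0 2 - b*X 0 2*Y 0 0 - d*X 0 2*Y 0 1)
       (- b*X 0 0*Y 0 1 + b*X 0 0*Y 0 2 + b*X 0 1*Y 0 0 + d*X 0 1*Y 0 2 - b*X 0 2*Y 0 0 - d*X 0 2*Y 0 1).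
Proof.
rewrite /brk sum3v !sum3v /bc /=.
by apply/row3; rewrite !mxE /=; ring.
Qed.

Lemma gmE (R : realFieldType) (X Y : 'rV[R]_3) :
  gm X Y = X 0 0*Y 0 0 + X 0 1*Y 0 1 - X 0 2*Y 0 2.
Proof. rewrite /gm sum3 /eps /=; ring. Qed.

Lemma nablaE (R : realFieldType) (a b g d : R) (X Y : 'rV[R]_3) :
  nabla a b g d X Y =
  vec3 (- a*X 0 0*Y 0 1 + a*X 0 0*Y 0 2 + (1/2)*g*X 0 1*Y 0 2 - (1/2)*g*X 0 2*Y 0 1 - b*X 0 1*Y 0 1 + b*X 0 1*Y 0 2 + b*X 0 2*Y 0 1 - b*X 0 2*Y 0 2)
       (b*X 0 1*Y 0 0 + d*X 0 1*Y 0 2 - b*X 0 2*Y 0 0 + a*X 0 0*Y 0 0 + (1/2)*g*X 0 0*Y 0 2 - d*X 0 2*Y 0 2 + (1/2)*g*X 0 2*Y 0 0)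
       (b*X 0 1*Y 0 0 - b*X 0 2*Y 0 0 - d*X 0 2*Y 0 1 + a*X 0 0*Y 0 0 + (1/2)*g*X 0 0*Y 0 1 + d*X 0 1*Y 0 1 + (1/2)*g*X 0 1*Y 0 0).
Proof.
rewrite /nabla sum3v !gmE !brkE /eps /=.
by apply/row3; rewrite !mxE /=; field; rewrite ?pnatr_eq0.
Qed.
Lemma nA00 (R : realFieldType) (a b g d : R) : nabla a b g d (e R 0) (e R 0) = vec3 0 ((1)*a) ((1)*a).
Proof. by rewrite nablaE; apply/row3; rewrite !mxE /=; field; rewrite ?pnatr_eq0. Qed.
Lemma nA01 (R : realFieldType) (a b g d : R) : nabla a b g d (e R 0) (e R 1) = vec3 ((-1)*a) 0 ((1/2)*g).
Proof. by rewrite nablaE; apply/row3; rewrite !mxE /=; field; rewrite ?pnatr_eq0. Qed.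
Lemma nA02 (R : realFieldType) (a b g d : R) : nabla a b g d (e R 0) (e R 2) = vec3 ((1)*a) ((1/2)*g) 0.
Proof. by rewrite nablaE; apply/row3; rewrite !mxE /=; field; rewrite ?pnatr_eq0. Qed.
Lemma nA10 (R : realFieldType) (a b g d : R) : nabla a b g d (e R 1) (e R 0) = vec3 0 ((1)*b) ((1)*b + (1/2)*g).
Proof. by rewrite nablaE; apply/row3; rewrite !mxE /=; field; rewrite ?pnatr_eq0. Qed.
Lemma nA11 (R : realFieldType) (a b g d : R) : nabla a b g d (e R 1) (e R 1) = vec3 ((-1)*b) 0 ((1)*d).
Proof. by rewrite nablaE; apply/row3; rewrite !mxE /=; field; rewrite ?pnatr_eq0. Qed.
Lemma nA12 (R : realFieldType) (a b g d : R) : nabla a b g d (e R 1) (e R 2) = vec3 ((1/2)*g + (1)*b) ((1)*d) 0.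
Proof. by rewrite nablaE; apply/row3; rewrite !mxE /=; field; rewrite ?pnatr_eq0. Qed.
Lemma nA20 (R : realFieldType) (a b g d : R) : nabla a b g d (e R 2) (e R 0) = vec3 0 ((-1)*b + (1/2)*g) ((-1)*b).
Proof. by rewrite nablaE; apply/row3; rewrite !mxE /=; field; rewrite ?pnatr_eq0. Qed.
Lemma nA21 (R : realFieldType) (a b g d : R) : nabla a b g d (e R 2) (e R 1) = vec3 ((-1/2)*g + (1)*b) 0 ((-1)*d).
Proof. by rewrite nablaE; apply/row3; rewrite !mxE /=; field; rewrite ?pnatr_eq0. Qed.
Lemma nA22 (R : realFieldType) (a b g d : R) : nabla a b g d (e R 2) (e R 2) = vec3 ((-1)*b) ((-1)*d) 0.
Proof. by rewrite nablaE; apply/row3; rewrite !mxE /=; field; rewrite ?pnatr_eq0. Qed.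
Lemma nB0 (R : realFieldType) (a b g d : R) (X : 'rV[R]_3) : nabla a b g d X (e R 0) = vec3 0 ((1)*b*X 0 1 + (-1)*b*X 0 2 + (1)*a*X 0 0 + (1/2)*g*X 0 2) ((1)*b*X 0 1 + (-1)*b*X 0 2 + (1)*a*X 0 0 + (1/2)*g*X 0 1).
Proof. by rewrite nablaE; apply/row3; rewrite !mxE /=; field; rewrite ?pnatr_eq0. Qed.
Lemma nB1 (R : realFieldType) (a b g d : R) (X : 'rV[R]_3) : nabla a b g d X (e R 1) = vec3 ((-1)*a*X 0 0 + (-1/2)*g*X 0 2 + (-1)*b*X 0 1 + (1)*b*X 0 2) 0 ((-1)*d*X 0 2 + (1/2)*g*X 0 0 + (1)*d*X 0 1).
Proof. by rewrite nablaE; apply/row3; rewrite !mxE /=; field; rewrite ?pnatr_eq0. Qed.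
Lemma nB2 (R : realFieldType) (a b g d : R) (X : 'rV[R]_3) : nabla a b g d X (e R 2) = vec3 ((1)*a*X 0 0 + (1/2)*g*X 0 1 + (1)*b*X 0 1 + (-1)*b*X 0 2) ((1)*d*X 0 1 + (1/2)*g*X 0 0 + (-1)*d*X 0 2) 0.
Proof. by rewrite nablaE; apply/row3; rewrite !mxE /=; field; rewrite ?pnatr_eq0. Qed.
Lemma nC0 (R : realFieldType) (a b g d : R) (Y : 'rV[R]_3) : nabla a b g d (e R 0) Y = vec3 ((-1)*a*Y 0 1 + (1)*a*Y 0 2) ((1)*a*Y 0 0 + (1/2)*g*Y 0 2) ((1)*a*Y 0 0 + (1/2)*g*Y 0 1).
Proof. by rewrite nablaE; apply/row3; rewrite !mxE /=; field; rewrite ?pnatr_eq0. Qed.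
Lemma nC1 (R : realFieldType) (a b g d : R) (Y : 'rV[R]_3) : nabla a b g d (e R 1) Y = vec3 ((1/2)*g*Y 0 2 + (-1)*b*Y 0 1 + (1)*b*Y 0 2) ((1)*b*Y 0 0 + (1)*d*Y 0 2) ((1)*b*Y 0 0 + (1)*d*Y 0 1 + (1/2)*g*Y 0 0).
Proof. by rewrite nablaE; apply/row3; rewrite !mxE /=; field; rewrite ?pnatr_eq0. Qed.
Lemma nC2 (R : realFieldType) (a b g d : R) (Y : 'rV[R]_3) : nabla a b g d (e R 2) Y = vec3 ((-1/2)*g*Y 0 1 + (1)*b*Y 0 1 + (-1)*b*Y 0 2) ((-1)*b*Y 0 0 + (-1)*d*Y 0 2 + (1/2)*g*Y 0 0) ((-1)*b*Y 0 0 + (-1)*d*Y 0 1).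
Proof. by rewrite nablaE; apply/row3; rewrite !mxE /=; field; rewrite ?pnatr_eq0. Qed.
Lemma bD0 (R : realFieldType) (a b g d : R) (X : 'rV[R]_3) : brk a b g d X (e R 0) = vec3 ((1)*a*X 0 1 + (-1)*a*X 0 2) ((1)*b*X 0 1 + (-1)*b*X 0 2) ((1)*b*X 0 1 + (-1)*b*X 0 2).
Proof. by rewrite brkE; apply/row3; rewrite !mxE /=; ring. Qed.
Lemma bD1 (R : realFieldType) (a b g d : R) (X : 'rV[R]_3) : brk a b g d X (e R 1) = vec3 ((-1)*a*X 0 0 + (-1)*g*X 0 2) ((-1)*b*X 0 0 + (-1)*d*X 0 2) ((-1)*b*X 0 0 + (-1)*d*X 0 2).
Proof. by rewrite brkE; apply/row3; rewrite !mxE /=; ring. Qed.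
Lemma bD2 (R : realFieldType) (a b g d : R) (X : 'rV[R]_3) : brk a b g d X (e R 2) = vec3 ((1)*a*X 0 0 + (1)*g*X 0 1) ((1)*b*X 0 0 + (1)*d*X 0 1) ((1)*b*X 0 0 + (1)*d*X 0 1).
Proof. by rewrite brkE; apply/row3; rewrite !mxE /=; ring. Qed.
Lemma cv00 (R : realFieldType) (a b g d : R) (X : 'rV[R]_3) : curv a b g d X (e R 0) (e R 0) = vec3 0 ((1)*a*d*X 0 1 + (-1)*a*d*X 0 2 + (1)*b*g*X 0 2 + (-1)*b*g*X 0 1 + (-1/4)*g*g*X 0 1 + (-1)*a*a*X 0 1 + (1)*a*a*X 0 2) ((1)*a*d*X 0 1 + (-1)*a*d*X 0 2 + (1)*b*g*X 0 2 + (-1)*b*g*X 0 1 + (-1/4)*g*g*X 0 2 + (-1)*a*a*X 0 1 + (1)*a*a*X 0 2).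
Proof. rewrite /curv nA00 nB0 nC0 bD0 nB0 nablaE. by apply/row3; rewrite !mxE /=; field; rewrite ?pnatr_eq0. Qed.
Lemma cv01 (R : realFieldType) (a b g d : R) (X : 'rV[R]_3) : curv a b g d X (e R 0) (e R 1) = vec3 ((1/4)*g*g*X 0 1 + (1)*b*g*X 0 1 + (-1)*b*g*X 0 2 + (1)*a*d*X 0 2 + (-1)*a*d*X 0 1 + (1)*a*a*X 0 1 + (-1)*a*a*X 0 2) 0 ((-1)*a*g*X 0 1 + (1)*a*g*X 0 2).
Proof. rewrite /curv nA01 nB1 nC0 bD0 nB1 nablaE. by apply/row3; rewrite !mxE /=; field; rewrite ?pnatr_eq0. Qed.
Lemma cv02 (R : realFieldType) (a b g d : R) (X : 'rV[R]_3) : curv a b g d X (e R 0) (e R 2) = vec3 ((-1/4)*g*g*X 0 2 + (-1)*b*g*X 0 1 + (1)*b*g*X 0 2 + (1)*a*d*X 0 1 + (-1)*a*d*X 0 2 + (-1)*a*a*X 0 1 + (1)*a*a*X 0 2) ((1)*a*g*X 0 2 + (-1)*a*g*X 0 1) 0.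
Proof. rewrite /curv nA02 nB2 nC0 bD0 nB2 nablaE. by apply/row3; rewrite !mxE /=; field; rewrite ?pnatr_eq0. Qed.
Lemma cv10 (R : realFieldType) (a b g d : R) (X : 'rV[R]_3) : curv a b g d X (e R 1) (e R 0) = vec3 0 ((1)*b*g*X 0 0 + (1/4)*g*g*X 0 0 + (-1)*a*d*X 0 0 + (1)*a*a*X 0 0 + (1)*a*g*X 0 2) ((1)*b*g*X 0 0 + (-1)*a*d*X 0 0 + (1)*a*a*X 0 0 + (1)*a*g*X 0 2).
Proof. rewrite /curv nA10 nB0 nC1 bD1 nB0 nablaE. by apply/row3; rewrite !mxE /=; field; rewrite ?pnatr_eq0. Qed.
Lemma cv11 (R : realFieldType) (a b g d : R) (X : 'rV[R]_3) : curv a b g d X (e R 1) (e R 1) = vec3 ((1)*a*d*X 0 0 + (-1/4)*g*g*X 0 0 + (-1)*b*g*X 0 0 + (-1)*a*a*X 0 0 + (-1)*a*g*X 0 2) 0 ((1)*a*g*X 0 0 + (3/4)*g*g*X 0 2).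
Proof. rewrite /curv nA11 nB1 nC1 bD1 nB1 nablaE. by apply/row3; rewrite !mxE /=; field; rewrite ?pnatr_eq0. Qed.
Lemma cv12 (R : realFieldType) (a b g d : R) (X : 'rV[R]_3) : curv a b g d X (e R 1) (e R 2) = vec3 ((-1)*a*d*X 0 0 + (1)*b*g*X 0 0 + (1)*a*a*X 0 0 + (1)*a*g*X 0 2) ((1)*a*g*X 0 0 + (3/4)*g*g*X 0 2) 0.
Proof. rewrite /curv nA12 nB2 nC1 bD1 nB2 nablaE. by apply/row3; rewrite !mxE /=; field; rewrite ?pnatr_eq0. Qed.
Lemma cv20 (R : realFieldType) (a b g d : R) (X : 'rV[R]_3) : curv a b g d X (e R 2) (e R 0) = vec3 0 ((-1)*b*g*X 0 0 + (1)*a*d*X 0 0 + (-1)*a*a*X 0 0 + (-1)*a*g*X 0 1) ((-1)*b*g*X 0 0 + (1/4)*g*g*X 0 0 + (1)*a*d*X 0 0 + (-1)*a*a*X 0 0 + (-1)*a*g*X 0 1).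
Proof. rewrite /curv nA20 nB0 nC2 bD2 nB0 nablaE. by apply/row3; rewrite !mxE /=; field; rewrite ?pnatr_eq0. Qed.
Lemma cv21 (R : realFieldType) (a b g d : R) (X : 'rV[R]_3) : curv a b g d X (e R 2) (e R 1) = vec3 ((-1)*a*d*X 0 0 + (1)*b*g*X 0 0 + (1)*a*a*X 0 0 + (1)*a*g*X 0 1) 0 ((-1)*a*g*X 0 0 + (-3/4)*g*g*X 0 1).
Proof. rewrite /curv nA21 nB1 nC2 bD2 nB1 nablaE. by apply/row3; rewrite !mxE /=; field; rewrite ?pnatr_eq0. Qed.
Lemma cv22 (R : realFieldType) (a b g d : R) (X : 'rV[R]_3) : curv a b g d X (e R 2) (e R 2) = vec3 ((1)*a*d*X 0 0 + (1/4)*g*g*X 0 0 + (-1)*b*g*X 0 0 + (-1)*a*a*X 0 0 + (-1)*a*g*X 0 1) ((-1)*a*g*X 0 0 + (-3/4)*g*g*X 0 1) 0.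
Proof. rewrite /curv nA22 nB2 nC2 bD2 nB2 nablaE. by apply/row3; rewrite !mxE /=; field; rewrite ?pnatr_eq0. Qed.
Lemma rh0 (R : realFieldType) (a b g d : R) (X : 'rV[R]_3) : rho a b g d X (e R 0) = ((-1/2)*g*g*X 0 0 + (-1)*a*g*X 0 2 + (1)*a*g*X 0 1).
Proof. rewrite /rho cv00 cv10 cv20 !gmE. by rewrite !mxE /=; field; rewrite ?pnatr_eq0. Qed.
Lemma rh1 (R : realFieldType) (a b g d : R) (X : 'rV[R]_3) : rho a b g d X (e R 1) = ((1/2)*g*g*X 0 1 + (-1)*b*g*X 0 1 + (1)*b*g*X 0 2 + (-1)*a*d*X 0 2 + (1)*a*d*X 0 1 + (-1)*a*a*X 0 1 + (1)*a*a*X 0 2 + (1)*a*g*X 0 0).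
Proof. rewrite /rho cv01 cv11 cv21 !gmE. by rewrite !mxE /=; field; rewrite ?pnatr_eq0. Qed.
Lemma rh2 (R : realFieldType) (a b g d : R) (X : 'rV[R]_3) : rho a b g d X (e R 2) = ((-1/2)*g*g*X 0 2 + (1)*b*g*X 0 1 + (-1)*b*g*X 0 2 + (-1)*a*d*X 0 1 + (1)*a*d*X 0 2 + (1)*a*a*X 0 1 + (-1)*a*a*X 0 2 + (-1)*a*g*X 0 0).
Proof. rewrite /rho cv02 cv12 cv22 !gmE. by rewrite !mxE /=; field; rewrite ?pnatr_eq0. Qed.
Lemma RicE (R : realFieldType) (a b g d : R) (X : 'rV[R]_3) : Ric a b g d X = vec3 ((-1/2)*g*g*X 0 0 + (1)*a*g*X 0 1 + (-1)*a*g*X 0 2) ((1)*a*g*X 0 0 + (1/2)*g*g*X 0 1 + (-1)*b*g*X 0 1 + (1)*a*d*X 0 1 + (-1)*a*a*X 0 1 + (1)*b*g*X 0 2 + (-1)*a*d*X 0 2 + (1)*a*a*X 0 2) ((1)*a*g*X 0 0 + (-1)*b*g*X 0 1 + (1)*a*d*X 0 1 + (-1)*a*a*X 0 1 + (1/2)*g*g*X 0 2 + (1)*b*g*X 0 2 + (-1)*a*d*X 0 2 + (1)*a*a*X 0 2).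
Proof. rewrite /Ric sum3v rh0 rh1 rh2 /eps. by apply/row3; rewrite !mxE /=; field; rewrite ?pnatr_eq0. Qed.
Lemma scalE (R : realFieldType) (a b g d : R) : scal a b g d = (1/2)*g*g.
Proof. by rewrite /scal !rh0 !rh1 !rh2 !mxE /=; field; rewrite ?pnatr_eq0. Qed.

Lemma eq_lin (R : comRingType) (L Rr T c : R) : L = Rr -> T = c * (L - Rr) -> T = 0.
Proof. by move=> -> ->; rewrite subrr mulr0. Qed.

Lemma comp (R : realFieldType) (j : 'I_3) (u v : 'rV[R]_3) : u = v -> u 0 j = v 0 j.
Proof. by move=> ->. Qed.

Lemma bE01 (R : realFieldType) (a b g d : R) : brk a b g d (e R 0) (e R 1) = vec3 (-a) (-b) (-b).
Proof. by rewrite bD1; apply/row3; rewrite !mxE /=; ring. Qed.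
Lemma bE12 (R : realFieldType) (a b g d : R) : brk a b g d (e R 1) (e R 2) = vec3 g d d.
Proof. by rewrite bD2; apply/row3; rewrite !mxE /=; ring. Qed.
Lemma RE0 (R : realFieldType) (a b g d : R) : Ric a b g d (e R 0) = vec3 (-(1/2)*g*g) (a*g) (a*g).
Proof. by rewrite RicE; apply/row3; rewrite !mxE /=; ring. Qed.
Lemma RE1 (R : realFieldType) (a b g d : R) : Ric a b g d (e R 1) =
  vec3 (a*g) ((1/2)*g*g - b*g + a*d - a*a) (- b*g + a*d - a*a).
Proof. by rewrite RicE; apply/row3; rewrite !mxE /=; ring. Qed.
Lemma RE2 (R : realFieldType) (a b g d : R) : Ric a b g d (e R 2) =
  vec3 (-a*g) (b*g - a*d + a*a) ((1/2)*g*g + b*g - a*d + a*a).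
Proof. by rewrite RicE; apply/row3; rewrite !mxE /=; ring. Qed.

Theorem theorem3p8 (R : realFieldType) (alpha beta gamma delta lambda0 c : R) :
  alpha + delta != 0 -> alpha * gamma = 0 ->
  (algebraic_schouten_soliton alpha beta gamma delta lambda0 c <->
   (gamma = 0 /\ c = 0)).
Proof.
move=> had hag; split.
- case=> D [hD hR].
  have hk : scal alpha beta gamma delta * lambda0 + c = (1/2)*gamma*gamma*lambda0 + c
    by rewrite scalE.
  move: hR; rewrite hk; move: (1 / 2 * gamma * gamma * lambda0 + c) (hk) => k hk' hR.
  have hXD : forall X, X *m D = Ric alpha beta gamma delta X - k *: X.
    by move=> X; rewrite hR addrC addKr.
  have E01 := hD (e R 0) (e R 1).
  have E12 := hD (e R 1) (e R 2).
  rewrite !hXD bE01 bE12 RE0 RE1 RE2 !RicE !brkE in E01 E12.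
  have E010 := @comp _ 0 _ _ E01; have E121 := @comp _ 1 _ _ E12; have E120 := @comp _ 0 _ _ E12.
  rewrite !mxE /= in E010 E121 E120.
  have [g0|gn0] := eqVneq gamma 0.
  + subst gamma; split=> //.
    have h1 : k * alpha = 0.
      by apply: (@eq_lin _ _ _ _ (-1) E010); ring.
    have h2 : k * delta = 0.
      by apply: (@eq_lin _ _ _ _ (1) E121); ring.
    have : k * (alpha + delta) = 0 by rewrite mulrDr h1 h2 addr0.
    move/eqP; rewrite mulf_eq0 (negbTE had) orbF => /eqP k0.
    by move: hk'; rewrite k0 scalE; move=> <-; ring.
  + have a0 : alpha = 0.
      by move/eqP: hag; rewrite mulf_eq0 (negbTE gn0) orbF => /eqP.
    subst alpha; rewrite add0r in had.
    have h2 : gamma * (k - 3/2 * gamma * gamma) = 0.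
      by apply: (@eq_lin _ _ _ _ (1) E120); field; rewrite ?pnatr_eq0.
    have h3 : delta * (k - 1/2 * gamma * gamma) = 0.
      by apply: (@eq_lin _ _ _ _ (1) E121); field; rewrite ?pnatr_eq0.
    move/eqP: h2; rewrite mulf_eq0 (negbTE gn0) /= subr_eq0 => /eqP h2.
    move/eqP: h3; rewrite mulf_eq0 (negbTE had) /= subr_eq0 => /eqP h3.
    have : gamma * gamma = 0.
      have -> : gamma * gamma = 3/2 * gamma * gamma - 1/2 * gamma * gamma.
        by field; rewrite ?pnatr_eq0.
      by rewrite -h2 -h3 subrr.
    by move/eqP; rewrite mulf_eq0 (negbTE gn0).
- case=> -> ->.
  pose D : 'M[R]_3 := \matrix_(i < 3, j < 3) (Ric alpha beta 0 delta (e R i)) 0 j.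
  have hXD : forall X, X *m D = Ric alpha beta 0 delta X.
    move=> X; apply/row3; rewrite !mxE sum3 !mxE RE0 RE1 RE2 RicE !mxE /=; ring.
  exists D; split.
  + move=> X Y; rewrite !hXD !RicE !brkE; apply/row3; rewrite !mxE /=; ring.
  + move=> X; rewrite hXD scalE (_ : 1/2*0*0*lambda0 + 0 = 0 :> R); last by ring.
    by rewrite scale0r add0r.
Qed.
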